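(* For every integer $n\ge 2$, \[ \gamma_{2t}(K_n\Box K_n)=\begin{cases}3n/2, & n\equiv 0\pmod 4,\\ (3n+1)/2, & n\equiv 1\pmod 2,\\ (3n+2)/2, & n\equiv 2\pmod 4.\end{cases} \]
   Context: For a graph $G=(V,E)$, a set $S\subseteq V$ is a total $2$-dominating set if every vertex of $V$ (including those in $S$) is adjacent to at least $2$ vertices of $S$; $\gamma_{2t}(G)$ is the minimum cardinality of such a set. $G\Box H$ denotes the Cartesian product: vertex set $V(G)\times V(H)$, with $(u_1,v_1)\sim(u_2,v_2)$ iff either $u_1=u_2$ and $v_1\sim v_2$, or $v_1=v_2$ and $u_1\sim u_2$. $K_n$ is the complete graph on $n$ vertices. *)

(* Defs.v *)
From mathcomp Require Import all_boot.
Set Implicit Arguments. Unset Strict Implicit. Unset Printing Implicit Defensive.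

Definition nbhd (T : finType) (adj : rel T) (v : T) : {set T} := [set u | adj v u].

Definition total_k_dominating (T : finType) (adj : rel T) (k : nat) (S : {set T}) : bool :=
  [forall v, k <= #|nbhd adj v :&: S|].

Definition total_2_dominating (T : finType) (adj : rel T) (S : {set T}) : bool :=
  total_k_dominating adj 2 S.

Definition is_gamma2t (T : finType) (adj : rel T) (m : nat) : Prop :=
  (exists S : {set T}, total_2_dominating adj S /\ #|S| = m) /\
  (forall S : {set T}, total_2_dominating adj S -> m <= #|S|).

Definition K_adj (n : nat) : rel 'I_n := fun x y => x != y.

Definition cart_adj (T1 T2 : finType) (a1 : rel T1) (a2 : rel T2) : rel (T1 * T2) :=
  fun p q => ((p.1 == q.1) && a2 p.2 q.2) || ((p.2 == q.2) && a1 p.1 q.1).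

(* Main.v *)
Require Import Defs.
From mathcomp Require Import all_boot zify.
Set Implicit Arguments. Unset Strict Implicit. Unset Printing Implicit Defensive.

Definition rowc n (P : 'I_n -> 'I_n -> bool) (i : 'I_n) : nat := \sum_(b < n) P i b.
Definition colc n (P : 'I_n -> 'I_n -> bool) (j : 'I_n) : nat := \sum_(a < n) P a j.

Definition target (n : nat) : nat :=
  if n %% 4 == 0 then (3 * n) %/ 2
  else if odd n then (3 * n + 1) %/ 2
  else (3 * n + 2) %/ 2.

Lemma sum_const_ord n c : \sum_(i < n) c = c * n.
Proof. by rewrite sum_nat_const card_ord mulnC. Qed.

Lemma sum_rc n (P : 'I_n -> 'I_n -> bool) : \sum_i rowc P i = \sum_j colc P j.
Proof. by rewrite /rowc /colc exchange_big. Qed.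

Lemma empty_row n (P : 'I_n -> 'I_n -> bool)
  (H : forall i j, 2 + 2 * P i j <= rowc P i + colc P j) i :
  rowc P i = 0 -> 2 * n <= \sum_j colc P j.
Proof.
move=> h0.
have Pi0 : forall b, P i b = false.
  move=> b; apply/negbTE/negP => Pb.
  have : P i b <= rowc P i by rewrite /rowc (bigD1 b) //= leq_addr.
  by rewrite h0 Pb.
rewrite -sum_const_ord.
apply: leq_sum => j _; have := H i j; rewrite h0 Pi0 /=; lia.
Qed.

Lemma row_ineq n (P : 'I_n -> 'I_n -> bool)
  (H : forall i j, 2 + 2 * P i j <= rowc P i + colc P j) i :
  1 <= rowc P i ->
  3 + \sum_b (P i b && (colc P b == 1)) + ~~ odd (rowc P i)
    <= rowc P i + rowc P i + (rowc P i == 1).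
Proof.
move=> hr.
case: (leqP (rowc P i) 2) => hr2.
  have -> : \sum_b (P i b && (colc P b == 1)) = 0.
    rewrite big1 // => b _; case Pib: (P i b) => //=.
    have := H i b; rewrite Pib => hb.
    have -> : (colc P b == 1) = false by apply/eqP; lia.
    by [].
  have : rowc P i = 1 \/ rowc P i = 2 by lia.
  by case=> ->.
have hL : \sum_b (P i b && (colc P b == 1)) <= rowc P i.
  by apply: leq_sum => b _; case: (P i b) => //=; case: (_ == 1).
have -> : (rowc P i == 1) = false by apply/eqP; lia.
have [e3|n3] := eqVneq (rowc P i) 3.
  rewrite e3 in hL *; have : (~~ odd 3 : nat) = 0 by []. lia.
have : (~~ odd (rowc P i) : nat) <= 1 by case: (~~ odd _).
lia.
Qed.

Lemma sum_leaf n (P : 'I_n -> 'I_n -> bool) :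
  \sum_i \sum_b (P i b && (colc P b == 1)) = \sum_b (colc P b == 1).
Proof.
rewrite exchange_big; apply: eq_bigr => b _.
case: eqP => h.
  transitivity (colc P b); last by rewrite h.
  by apply: eq_bigr => i _; rewrite andbT.
by rewrite big1 // => i _; rewrite andbF.
Qed.

Lemma odd_sum_all n (F : 'I_n -> nat) :
  (forall i, odd (F i)) -> odd (\sum_i F i) = odd n.
Proof.
move=> h.
transitivity (odd (\sum_(i < n) 1)); last by rewrite sum_const_ord mul1n.
apply: (big_ind2 (fun x y => odd x = odd y)) => //.
  by move=> x1 x2 y1 y2 e1 e2; rewrite !oddD e1 e2.
by move=> i _; rewrite h.
Qed.

Lemma lower n (P : 'I_n -> 'I_n -> bool) (hn : 2 <= n)
  (H : forall i j, 2 + 2 * P i j <= rowc P i + colc P j) :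
  target n <= \sum_i rowc P i.
Proof.
have tb : target n <= 2 * n by rewrite /target; case: (n %% 4 == 0); case: (odd n); lia.
have HT : forall i j, 2 + 2 * P j i <= colc P i + rowc P j.
  by move=> i j; rewrite [colc _ _ + _]addnC; apply: H.
case: (boolP [exists i, rowc P i == 0]).
  move=> /existsP [i /eqP hi]; rewrite sum_rc.
  exact: leq_trans tb (empty_row H hi).
move=> /existsPn hr.
case: (boolP [exists j, colc P j == 0]).
  move=> /existsP [j /eqP hj].
  exact: leq_trans tb (@empty_row n (fun a b => P b a) HT j hj).
move=> /existsPn hc.
have hr1 : forall i, 1 <= rowc P i by move=> i; have := hr i; case: (rowc P i).
have hc1 : forall j, 1 <= colc P j by move=> j; have := hc j; case: (colc P j).
have R : \sum_i (3 + \sum_b (P i b && (colc P b == 1)) + ~~ odd (rowc P i))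
   <= \sum_i (rowc P i + rowc P i + (rowc P i == 1)).
  by apply: leq_sum => i _; exact: (row_ineq H (hr1 i)).
have C : \sum_j (3 + \sum_a (P a j && (rowc P a == 1)) + ~~ odd (colc P j))
   <= \sum_j (colc P j + colc P j + (colc P j == 1)).
  by apply: leq_sum => j _; exact: (@row_ineq n (fun a b => P b a) HT j (hc1 j)).
rewrite !big_split /= sum_const_ord sum_leaf in R.
rewrite !big_split /= sum_const_ord in C.
have SL := @sum_leaf n (fun a b => P b a); rewrite /= in SL.
rewrite SL -sum_rc in C.
set E := \sum_i ~~ odd (rowc P i) in R.
have par : E = 0 -> odd (\sum_i rowc P i) = odd n.
  move=> /eqP; rewrite sum_nat_eq0 => /forall_inP hE.
  apply: odd_sum_all => i; have := hE i isT; by case: (odd _).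
move: R C par; rewrite /target.
set m := \sum_i rowc P i.
set A := \sum_i (rowc P i == 1).
set B := \sum_i (colc P i == 1).
move=> R C par.
have par' : E = 0 -> m %% 2 = n %% 2 by move=> e; rewrite !modn2 par.
case: ifP => [/eqP h4|h4]; first lia.
case: ifP => ho.
  have : n %% 2 = 1 by rewrite modn2 ho.
  lia.
have : n %% 2 = 0 by rewrite modn2 ho.
lia.
Qed.

Definition PS n (S : {set 'I_n * 'I_n}) := fun a b => (a, b) \in S.

Lemma card_sum (T : finType) (A : {set T}) : #|A| = \sum_(x : T) (x \in A).
Proof. by rewrite -sum1_card big_mkcond; apply: eq_bigr => x _; case: (x \in A). Qed.

Lemma cardS_sum n (S : {set 'I_n * 'I_n}) : #|S| = \sum_i rowc (PS S) i.
Proof.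
rewrite card_sum /rowc /PS pair_big /=; apply: eq_bigr => -[a b] _ //.
Qed.

Lemma nbhd_formula n (S : {set 'I_n * 'I_n}) i j :
  #|nbhd (cart_adj (@K_adj n) (@K_adj n)) (i, j) :&: S| + 2 * ((i, j) \in S)
  = rowc (PS S) i + colc (PS S) j.
Proof.
rewrite card_sum.
have -> : \sum_p (p \in nbhd (cart_adj (@K_adj n) (@K_adj n)) (i, j) :&: S) =
  \sum_(a < n) \sum_(b < n) ((((i == a) && (j != b)) && ((a, b) \in S)) +
                             (((j == b) && (i != a)) && ((a, b) \in S))).
  rewrite pair_big /=; apply: eq_bigr => -[a b] _ /=.
  rewrite !inE /cart_adj /K_adj /=.
  by case: (i == a); case: (j == b); case: ((a, b) \in S).
under eq_bigr => a _ do rewrite big_split.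
have E1 : \sum_(a < n) \sum_(b < n) (((i == a) && (j != b)) && ((a, b) \in S)) =
          \sum_(b < n) (if b != j then ((i, b) \in S) : nat else 0).
  rewrite (bigD1 i) //= [X in _ + X]big1 ?addn0.
    by apply: eq_bigr => b _; rewrite eqxx eq_sym; case: (b != j).
  by move=> a /negbTE nai; apply: big1 => b _; rewrite eq_sym nai.
have E2 : \sum_(a < n) \sum_(b < n) (((j == b) && (i != a)) && ((a, b) \in S)) =
          \sum_(a < n) (if a != i then ((a, j) \in S) : nat else 0).
  rewrite exchange_big (bigD1 j) //= [X in _ + X]big1 ?addn0.
    by apply: eq_bigr => a _; rewrite eqxx eq_sym; case: (a != i).
  by move=> b /negbTE nbj; apply: big1 => a _; rewrite eq_sym nbj.
rewrite big_split /= E1 E2.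
have E3 : \sum_(b < n) (((i, b) \in S) : nat) =
   ((i, j) \in S) + \sum_(b < n) (if b != j then ((i, b) \in S) : nat else 0).
  by rewrite (bigD1 j) //= big_mkcond.
have E4 : \sum_(a < n) (((a, j) \in S) : nat) =
   ((i, j) \in S) + \sum_(a < n) (if a != i then ((a, j) \in S) : nat else 0).
  by rewrite (bigD1 i) //= big_mkcond.
rewrite /rowc /colc /PS E3 E4.
move: (\sum_(b < n) _) (\sum_(a < n) _) => X Y. case: ((i, j) \in S) => /=; lia.
Qed.

Lemma dom_iff n (S : {set 'I_n * 'I_n}) :
  total_2_dominating (cart_adj (@K_adj n) (@K_adj n)) S <->
  (forall i j, 2 + 2 * PS S i j <= rowc (PS S) i + colc (PS S) j).
Proof.
rewrite /total_2_dominating /total_k_dominating; split.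
  move=> /forallP H i j; have := H (i, j); have := nbhd_formula S i j.
  rewrite /PS; lia.
move=> H; apply/forallP => -[i j]; have := H i j; have := nbhd_formula S i j.
rewrite /PS; lia.
Qed.

Lemma sum_eq_nat n x : \sum_(b < n) (nat_of_ord b == x) = (x < n).
Proof.
elim: n => [|n IH]; first by rewrite big_ord0.
rewrite big_ord_recr /= IH ltnS; by case: (ltngtP x n).
Qed.

Lemma sum_ge_nat n a : \sum_(i < n) (a <= nat_of_ord i) = n - a.
Proof.
elim: n => [|n IH]; first by rewrite big_ord0.
rewrite big_ord_recr /= IH; case: (leqP a n) => h /=; lia.
Qed.

Lemma wit1 n (G : nat -> bool) x : x < n -> G x -> 1 <= \sum_(b < n) G b.
Proof.
move=> hx Gx; rewrite (bigD1 (Ordinal hx)) //= Gx; lia.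
Qed.

Lemma wit3 n (G : nat -> bool) x y z : x < n -> y < n -> z < n ->
  x != y -> x != z -> y != z -> G x -> G y -> G z -> 3 <= \sum_(b < n) G b.
Proof.
move=> hx hy hz xy xz yz Gx Gy Gz.
rewrite (bigD1 (Ordinal hx)) //= (bigD1 (Ordinal hy)) /=; last first.
  by rewrite -val_eqE /= eq_sym.
rewrite (bigD1 (Ordinal hz)) /=; last first.
  by rewrite -!val_eqE /= eq_sym xz eq_sym yz.
rewrite Gx Gy Gz; lia.
Qed.

Definition aa n := if n %% 4 == 3 then n %/ 4 + 1 else n %/ 4.
Definition cen n x := minn ((x - aa n) %/ 3) (aa n - 1).
Definition Pf n (i j : nat) : bool :=
  ((aa n <= i) && (j == cen n i)) || ((aa n <= j) && (i == cen n j)) ||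
  ((n %% 4 == 3) && (i == aa n - 1) && (j == aa n - 1)).

Lemma aa_facts n : 3 <= n ->
  [/\ 1 <= aa n, (n %% 4 == 3) -> n = 4 * aa n - 1 & (n %% 4 != 3) -> 4 * aa n <= n].
Proof.
move=> hn; rewrite /aa; case: ifP => h; split => //; try lia.
Qed.

Lemma Pf_sym n i j : Pf n i j = Pf n j i.
Proof.
rewrite /Pf; congr (_ || _); first by rewrite orbC.
by rewrite -!andbA [(i == _) && _]andbC.
Qed.

Lemma Pf_small n i j : 3 <= n -> Pf n i j -> (i < aa n) || (j < aa n).
Proof.
move=> hn; have [a1 _ _] := aa_facts hn.
rewrite /Pf /cen => /orP [/orP [/andP [_ /eqP ->]|/andP [_ /eqP ->]]|/andP [/andP [_ /eqP ->] _]];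
  apply/orP; lia.
Qed.

Lemma row_ge1 n i : 3 <= n -> i < n -> 1 <= \sum_(b < n) Pf n i b.
Proof.
move=> hn hi; have [a1 h3 hn3] := aa_facts hn.
case: (leqP (aa n) i) => hai.
  apply: (@wit1 n (Pf n i) (cen n i)).
    rewrite /cen; case: (n %% 4 == 3) h3 hn3 => /= h3 hn3; [have := h3 isT | have := hn3 isT]; lia.
  by rewrite /Pf hai eqxx.
apply: (@wit1 n (Pf n i) (aa n + 3 * i)).
  case: (n %% 4 == 3) h3 hn3 => /= h3 hn3; [have := h3 isT | have := hn3 isT]; lia.
rewrite /Pf; apply/orP; left; apply/orP; right; apply/andP; split; first lia.
apply/eqP; rewrite /cen; lia.
Qed.

Lemma row_ge3 n i : 3 <= n -> i < aa n -> 3 <= \sum_(b < n) Pf n i b.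
Proof.
move=> hn hi; have [a1 h3 hn3] := aa_facts hn.
have key : forall t, t < 3 -> (t < 2) || (i < aa n - 1) || (n %% 4 != 3) ->
    aa n + 3 * i + t < n /\ Pf n i (aa n + 3 * i + t).
  move=> t ht cond; split.
    case: (boolP (n %% 4 == 3)) => e3.
      have := h3 e3; move: cond; rewrite e3 orbF; case/orP => c; lia.
    have := hn3 e3; lia.
  rewrite /Pf; apply/orP; left; apply/orP; right; apply/andP; split; first lia.
  apply/eqP; rewrite /cen; lia.
have [x1 P1] := key 0 isT isT.
have [x2 P2] := key 1 isT isT.
case: (boolP ((i < aa n - 1) || (n %% 4 != 3))) => c.
  have [x3 P3] := key 2 isT (c : (2 < 2) || _ || _).
  by apply: (wit3 x1 x2 x3 _ _ _ P1 P2 P3); apply/eqP; lia.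
have : (i == aa n - 1) && (n %% 4 == 3).
  by move: c; rewrite negb_or negbK -leqNgt => /andP [h1 ->]; rewrite andbT; apply/eqP; lia.
case/andP => /eqP ei e3.
have x3 : i < n by have := h3 e3; lia.
have P3 : Pf n i i by rewrite /Pf e3 ei eqxx /= !orbT.
by apply: (wit3 x1 x2 x3 _ _ _ P1 P2 P3); apply/eqP; lia.
Qed.

Lemma sum_sel n (c : bool) x : \sum_(b < n) (c && (nat_of_ord b == x)) <= c.
Proof.
case: c.
  apply: leq_trans (_ : _ <= \sum_(b < n) (nat_of_ord b == x)) _.
    by apply: leq_sum => b _.
  by rewrite sum_eq_nat; case: (_ < n).
by rewrite big1.
Qed.

Lemma upper n : 3 <= n -> \sum_(i < n) \sum_(b < n) Pf n i b <= target n.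
Proof.
move=> hn.
pose D1 (i b : 'I_n) := (aa n <= i) && (nat_of_ord b == cen n i).
pose D3 (i b : 'I_n) := ((n %% 4 == 3) && (nat_of_ord i == aa n - 1)) && (nat_of_ord b == aa n - 1).
have B : \sum_(i < n) \sum_(b < n) Pf n i b <=
   \sum_i \sum_b D1 i b + \sum_i \sum_b D1 b i + \sum_i \sum_b D3 i b.
  rewrite -!big_split; apply: leq_sum => i _; rewrite -!big_split; apply: leq_sum => b _.
  rewrite /Pf /D1 /D3 -!andbA.
  by case: (_ && _); case: (_ && _); case: (_ && _).
have S1 : \sum_i \sum_b D1 i b <= n - aa n.
  rewrite -sum_ge_nat; apply: leq_sum => i _; exact: sum_sel.
have S2 : \sum_i \sum_b D1 b i <= n - aa n by rewrite exchange_big.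
have S3 : \sum_i \sum_b D3 i b <= (n %% 4 == 3).
  apply: leq_trans (_ : _ <= \sum_(i < n) ((n %% 4 == 3) && (nat_of_ord i == aa n - 1))) _.
    by apply: leq_sum => i _; exact: sum_sel.
  exact: sum_sel.
have := leq_trans B (leq_add (leq_add S1 S2) S3).
rewrite /target /aa; case: (n %% 4 =P 3) => h3 /=.
  have m2 : n %% 2 = 1 by lia.
  have o : odd n by move: (modn2 n); rewrite m2; case: (odd n).
  rewrite o; case: ifP => [/eqP|]; lia.
case: ifP => [/eqP|] h0; first lia.
case: ifP => ho.
  have : n %% 2 = 1 by rewrite modn2 ho.
  lia.
have : n %% 2 = 0 by rewrite modn2 ho.
lia.
Qed.

Theorem theorem9 (n : nat) (hn : 2 <= n) :
  is_gamma2t (cart_adj (@K_adj n) (@K_adj n))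
    (if n %% 4 == 0 then (3 * n) %/ 2
     else if odd n then (3 * n + 1) %/ 2
     else (3 * n + 2) %/ 2).
Proof.
change (is_gamma2t (cart_adj (@K_adj n) (@K_adj n)) (target n)).
have LOW : forall S : {set 'I_n * 'I_n},
    total_2_dominating (cart_adj (@K_adj n) (@K_adj n)) S -> target n <= #|S|.
  by move=> S /dom_iff H; rewrite cardS_sum; exact: lower hn H.
split => //.
case: (ltngtP n 2) => [|h2|e2]; first lia.
  pose S := [set p : 'I_n * 'I_n | Pf n p.1 p.2].
  have hr : forall i, rowc (PS S) i = \sum_(b < n) Pf n i b.
    by move=> i; rewrite /rowc /PS; apply: eq_bigr => b _; rewrite inE.
  have hc : forall j, colc (PS S) j = \sum_(b < n) Pf n j b.
    by move=> j; rewrite /colc /PS; apply: eq_bigr => b _; rewrite inE Pf_sym.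
  have D : total_2_dominating (cart_adj (@K_adj n) (@K_adj n)) S.
    apply/dom_iff => i j; rewrite hr hc /PS inE /=.
    have r1 := row_ge1 h2 (ltn_ord i); have c1 := row_ge1 h2 (ltn_ord j).
    case P: (Pf n i j); last by rewrite muln0 addn0; exact: leq_add r1 c1.
    case/orP: (Pf_small h2 P) => h.
      exact: leq_trans _ (leq_add (row_ge3 h2 h) c1).
    exact: leq_trans _ (leq_add r1 (row_ge3 h2 h)).
  exists S; split => //; apply/eqP; rewrite eqn_leq LOW // andbT.
  rewrite cardS_sum; under eq_bigr => i _ do rewrite hr; exact: upper.
subst n; exists [set: 'I_2 * 'I_2]; split; last first.
  by rewrite cardsT card_prod card_ord.
apply/dom_iff => i j.
have e : forall k, rowc (PS [set: 'I_2 * 'I_2]) k = 2 /\ colc (PS [set: 'I_2 * 'I_2]) k = 2.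
  move=> k; split.
    by rewrite /rowc /PS (eq_bigr (fun _ => 1)) ?sum_const_ord // => b _; rewrite inE.
  by rewrite /colc /PS (eq_bigr (fun _ => 1)) ?sum_const_ord // => b _; rewrite inE.
have [-> _] := e i; have [_ ->] := e j.
by rewrite /PS inE.
Qed.
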